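(* Let $q$ be a prime power and $1\le d\le e$ integers, and assume $q\ge 3$, or $q=2$ and $d\neq e$. Then for all $0\le i\le d$ and $0\le j\le d$, with $h_{\max}=\min\{j,d-i\}$, $$|T_{h_{\max}}(i,j)|-|T_{h_{\max}-1}(i,j)|\le |B_j(i)|\le |T_{h_{\max}}(i,j)|,$$ and the sign of $B_j(i)$ is $(-1)^{\max(0,\,j+i-d)}$.
   Context: For integers $m\ge 0$ and $l$, ${m\brack l}=\prod_{t=1}^{l}\frac{q^{m-t+1}-1}{q^t-1}$ for $l\ge0$ and $0$ for $l<0$. For $0\le i,j\le d$, $$B_j(i)=\sum_{h=0}^{\min\{j,d-i\}}(-1)^{j-h}q^{eh+\binom{j-h}{2}}{d-h\brack d-j}{d-i\brack h};$$ these are the eigenvalues of the bilinear forms graph $H_q(d,e,j)$ (vertices: $d\times e$ matrices over $\mathbb F_q$, adjacent iff their difference has rank $j$). $T_h(i,j)$ denotes the $h$-th summand for $0\le h\le\min\{j,d-i\}$, and $T_{-1}(i,j)=0$. *)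

(* Defs.v *)
From mathcomp Require Import all_boot all_order all_algebra.
Set Implicit Arguments. Unset Strict Implicit. Unset Printing Implicit Defensive.
Import Order.TTheory GRing.Theory Num.Theory.
Local Open Scope ring_scope.

(* The exponent m-t+1 is written (m.+1 - t)%N; for t > m+1 the truncated value
   is 0, but then the factor at t = m+1 is already 0, so the product agrees. *)
Definition gbin (q : nat) (m l : nat) : rat :=
  \prod_(1 <= t < l.+1) ((q%:R ^+ (m.+1 - t) - 1) / (q%:R ^+ t - 1)).

Definition Tterm (q d e i j h : nat) : rat :=
  (-1) ^+ (j - h) * (q%:R) ^+ (e * h + 'C(j - h, 2))
  * gbin q (d - h) (d - j) * gbin q (d - i) h.

Definition Tprev (q d e i j h : nat) : rat :=
  if h is h'.+1 then Tterm q d e i j h' else 0.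

Definition Beig (q d e i j : nat) : rat :=
  \sum_(0 <= h < (minn j (d - i)).+1) Tterm q d e i j h.

Definition prime_power (q : nat) : Prop :=
  exists p k : nat, prime p /\ (0 < k)%N /\ q = (p ^ k)%N.

(* Main.v *)
Require Import Defs.
From mathcomp Require Import all_boot all_order all_algebra.
From mathcomp Require Import zify ring lra.
Import Order.TTheory GRing.Theory Num.Theory.
Local Open Scope ring_scope.

Lemma xgt1 (q : nat) : (2 <= q)%N -> 1 < (q%:R : rat).
Proof. by move=> h; rewrite (ltr_nat _ 1 q). Qed.

Lemma xpow_gt0 (q n : nat) : (2 <= q)%N -> (0 < n)%N -> 0 < (q%:R : rat) ^+ n - 1.
Proof. by move=> h hn; rewrite subr_gt0 exprn_egt1 ?xgt1 // -lt0n. Qed.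

Lemma G0 q m : gbin q m 0 = 1.
Proof. by rewrite /gbin big_geq. Qed.

Lemma G_rec q m l : gbin q m l.+1 =
  gbin q m l * (((q%:R : rat) ^+ (m.+1 - l.+1) - 1) / ((q%:R : rat) ^+ l.+1 - 1)).
Proof. by rewrite /gbin big_nat_recr. Qed.

Lemma G_pos q m l : (2 <= q)%N -> (l <= m)%N -> 0 < gbin q m l.
Proof.
move=> hq hl; rewrite /gbin big_nat_cond; apply: prodr_gt0 => t /andP[/andP[h1 h2] _].
apply: divr_gt0; apply: xpow_gt0 => //; lia.
Qed.

Lemma G_shift q m l : (2 <= q)%N -> (l <= m)%N ->
  gbin q m.+1 l * ((q%:R : rat) ^+ (m.+1 - l) - 1) = gbin q m l * ((q%:R:rat) ^+ m.+1 - 1).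
Proof.
move=> hq; elim: l => [|l IH] hl; first by rewrite !G0 subn0.
rewrite !G_rec.
have e1 : (m.+2 - l.+1 = m.+1 - l)%N by lia.
have e2 : (m.+1 - l.+1 = m - l)%N by lia.
rewrite e1 e2.
have -> : gbin q m.+1 l * (((q%:R:rat) ^+ (m.+1 - l) - 1) / ((q%:R:rat) ^+ l.+1 - 1)) * ((q%:R:rat) ^+ (m - l) - 1)
  = (gbin q m.+1 l * ((q%:R:rat) ^+ (m.+1 - l) - 1)) * (((q%:R:rat) ^+ (m - l) - 1) / ((q%:R:rat) ^+ l.+1 - 1)) by ring.
rewrite IH; last by lia.
ring.
Qed.

Lemma G_step2 q n k : (2 <= q)%N ->
  gbin q n k.+1 * ((q%:R : rat) ^+ k.+1 - 1) = gbin q n k * ((q%:R:rat) ^+ (n - k) - 1).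
Proof.
move=> hq; rewrite G_rec.
have hne : (q%:R:rat) ^+ k.+1 - 1 != 0 by rewrite gt_eqF // xpow_gt0.
have -> : (n.+1 - k.+1 = n - k)%N by lia.
by rewrite -!mulrA mulVf // mulr1.
Qed.

Lemma key (x : rat) a c k b e : 2 <= x ->
  x ^+ (c + k + 2) <= x ^+ e * (x - 1) ^+ 2 ->
  x ^+ a * (x ^+ c.+1 - 1) * (x ^+ k.+1 - 1) < x ^+ e * (x ^+ a.+1 - 1) * (x ^+ b.+1 - 1).
Proof.
move=> hx H.
have x1 : 1 <= x by lra.
have Xa : 1 <= x ^+ a by rewrite exprn_ege1.
have Xc : x <= x ^+ c.+1 by rewrite -{1}(expr1 x) ler_weXn2l.
have Xk : x <= x ^+ k.+1 by rewrite -{1}(expr1 x) ler_weXn2l.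
have Xb : x <= x ^+ b.+1 by rewrite -{1}(expr1 x) ler_weXn2l.
have Xe : 0 < x ^+ e by rewrite exprn_gt0 //; lra.
have E1 : x ^+ c.+1 * x ^+ k.+1 = x ^+ (c + k + 2) by rewrite -exprD; congr (_ ^+ _); lia.
have E2 : x ^+ a.+1 = x ^+ a * x by rewrite exprSr.
rewrite E2.
have s1 : (x ^+ c.+1 - 1) * (x ^+ k.+1 - 1) < x ^+ (c + k + 2) by rewrite -E1; nra.
have s1' : x ^+ a * (x ^+ c.+1 - 1) * (x ^+ k.+1 - 1) < x ^+ a * x ^+ (c + k + 2).
  by rewrite -mulrA ltr_pM2l //; lra.
have s2 : x ^+ a * x ^+ (c + k + 2) <= x ^+ a * (x ^+ e * (x - 1) ^+ 2).
  by rewrite ler_pM2l //; lra.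
have s3 : x ^+ a * (x - 1) <= x ^+ a * x - 1 by nra.
have s4 : x ^+ a * (x ^+ e * (x - 1) ^+ 2) <= x ^+ e * (x ^+ a * x - 1) * (x ^+ b.+1 - 1).
  have -> : x ^+ a * (x ^+ e * (x - 1) ^+ 2) = x ^+ e * (x ^+ a * (x - 1)) * (x - 1) by ring.
  apply: ler_pM; [|lra| |lra].
  - by apply: mulr_ge0; [lra|nra].
  - by rewrite ler_pM2l.
lra.
Qed.

Definition Ssum (A : nat -> rat) H := \sum_(0 <= h < H.+1) (-1) ^+ (H - h) * A h.

Lemma Ssum0 A : Ssum A 0 = A 0.
Proof. by rewrite /Ssum big_nat1 expr0 mul1r. Qed.

Lemma SsumS A H : Ssum A H.+1 = A H.+1 - Ssum A H.
Proof.
rewrite /Ssum big_nat_recr //= subnn expr0 mul1r addrC; congr (_ + _).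
rewrite -sumrN; apply: eq_big_nat => h /andP[_ hh].
by rewrite subSn // exprS mulN1r mulNr.
Qed.

Lemma alt (A : nat -> rat) H : (forall k, (k < H)%N -> A k <= A k.+1) -> 0 <= A 0 ->
  0 <= Ssum A H <= A H.
Proof.
move=> hm h0; elim: H hm => [|H IH] hm; first by rewrite Ssum0 h0 lexx.
have /andP[a b] := IH (fun k hk => hm k (ltnW hk)).
have := hm H (ltnSn H).
rewrite SsumS; move=> c; apply/andP; split; lra.
Qed.

Lemma cond_ok (q d e : nat) : (d <= e)%N -> (3 <= q)%N \/ (q = 2%N /\ d <> e) ->
  (q%:R : rat) ^+ (d + 1) <= (q%:R : rat) ^+ e * (q%:R - 1) ^+ 2.
Proof.
move=> hde [h3|[-> hne]].
- have x3 : (3 : rat) <= q%:R by rewrite (ler_nat _ 3 q).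
  have hx : (q%:R:rat) ^+ d <= q%:R ^+ e by rewrite ler_eXn2l //; lra.
  have hd0 : 0 <= (q%:R:rat) ^+ d by rewrite exprn_ge0 //; lra.
  have he0 : 0 < (q%:R:rat) ^+ e by rewrite exprn_gt0 //; lra.
  have hsq : (q%:R:rat) <= (q%:R - 1) ^+ 2 by rewrite expr2; nra.
  rewrite exprD expr1; apply: (le_trans (y := (q%:R:rat) ^+ e * q%:R)).
    by rewrite ler_pM2r //; lra.
  by rewrite ler_pM2l //; lra.
- have h : (d + 1 <= e)%N by lia.
  have -> : ((2%:R : rat) - 1) ^+ 2 = 1 by rewrite expr2; lra.
  by rewrite mulr1 ler_eXn2l // (ltr_nat _ 1 2).
Qed.

Definition Aterm (q d e i j h : nat) : rat :=
  (q%:R) ^+ (e * h + 'C(j - h, 2)) * gbin q (d - h) (d - j) * gbin q (d - i) h.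

Lemma Aterm_pos q d e i j h : (2 <= q)%N -> (h <= j)%N -> (j <= d)%N -> (h <= d - i)%N ->
  0 < Aterm q d e i j h.
Proof.
move=> hq h1 h2 h3; rewrite /Aterm; apply: mulr_gt0; [apply: mulr_gt0|].
- by rewrite exprn_gt0 // (ltr_nat _ 0 q); lia.
- by apply: G_pos => //; lia.
- by apply: G_pos => //; lia.
Qed.

Lemma Aterm_mono q d e i j k : (2 <= q)%N -> (3 <= q)%N \/ (q = 2%N /\ d <> e) ->
  (d <= e)%N -> (j <= d)%N -> (k.+1 <= j)%N -> (k.+1 <= d - i)%N ->
  Aterm q d e i j k < Aterm q d e i j k.+1.
Proof.
move=> hq hc hde hjd hkj hki; rewrite /Aterm.
set x : rat := q%:R.
set m := (d - k.+1)%N; set l := (d - j)%N; set n := (d - i)%N.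
set a := (j - k.+1)%N; set b := (n - k.+1)%N.
have hdk : (d - k = m.+1)%N by rewrite /m; lia.
rewrite hdk.
have hl : (l <= m)%N by rewrite /l /m; lia.
have S1 := G_shift q m l hq hl.
have S2 := G_step2 q n k hq.
have hml : (m.+1 - l = a.+1)%N by rewrite /m /l /a; lia.
have hnk : (n - k = b.+1)%N by rewrite /b /n; lia.
rewrite hml -/x in S1; rewrite hnk -/x in S2.
set g1 := gbin q m.+1 l in S1 *; set g0 := gbin q m l in S1 *.
set gn := gbin q n k in S2 *; set gn1 := gbin q n k.+1 in S2 *.
set E := (e * k + 'C(a, 2))%N.
have Ek : (e * k + 'C(j - k, 2) = E + a)%N.
  have -> : (j - k = a.+1)%N by rewrite /a; lia.
  by rewrite binS bin1 /E addnA.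
have Ek1 : (e * k.+1 + 'C(j - k.+1, 2) = E + e)%N by rewrite /E -/a mulnS; lia.
rewrite Ek Ek1 (exprD x E a) (exprD x E e).
have x2 : 2 <= x by rewrite /x (ler_nat _ 2 q).
have P0 : 0 < x ^+ E by rewrite exprn_gt0 //; lra.
have g0p : 0 < g0 by apply: G_pos.
have gnp : 0 < gn by apply: G_pos; rewrite /n; lia.
have U : 0 < x ^+ a.+1 - 1 by apply: xpow_gt0.
have W : 0 < x ^+ k.+1 - 1 by apply: xpow_gt0.
have K := @key x a m k b e x2.
have hK : x ^+ (m + k + 2) <= x ^+ e * (x - 1) ^+ 2.
  have -> : (m + k + 2 = d + 1)%N by rewrite /m; lia.
  exact: cond_ok.
have {}K := K hK.
rewrite -(ltr_pM2r (mulr_gt0 U W)).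
have -> : x ^+ E * x ^+ a * g1 * gn * ((x ^+ a.+1 - 1) * (x ^+ k.+1 - 1))
  = (x ^+ E * g0 * gn) * (x ^+ a * (x ^+ m.+1 - 1) * (x ^+ k.+1 - 1)).
  have -> : x ^+ E * x ^+ a * g1 * gn * ((x ^+ a.+1 - 1) * (x ^+ k.+1 - 1))
    = x ^+ E * x ^+ a * gn * (x ^+ k.+1 - 1) * (g1 * (x ^+ a.+1 - 1)) by ring.
  by rewrite S1; ring.
have -> : x ^+ E * x ^+ e * g0 * gn1 * ((x ^+ a.+1 - 1) * (x ^+ k.+1 - 1))
  = (x ^+ E * g0 * gn) * (x ^+ e * (x ^+ a.+1 - 1) * (x ^+ b.+1 - 1)).
  have -> : x ^+ E * x ^+ e * g0 * gn1 * ((x ^+ a.+1 - 1) * (x ^+ k.+1 - 1))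
    = x ^+ E * x ^+ e * g0 * (x ^+ a.+1 - 1) * (gn1 * (x ^+ k.+1 - 1)) by ring.
  by rewrite S2; ring.
by rewrite ltr_pM2l // !mulr_gt0.
Qed.

Theorem lemma4p1 (q d e : nat) (Hq : prime_power q)
  (Hd : (1 <= d)%N) (Hde : (d <= e)%N)
  (Hq3 : (3 <= q)%N \/ (q = 2%N /\ d <> e))
  (i j : nat) (Hi : (i <= d)%N) (Hj : (j <= d)%N) :
  let hmax := minn j (d - i) in
  `|Tterm q d e i j hmax| - `|Tprev q d e i j hmax| <= `|Beig q d e i j|
  /\ `|Beig q d e i j| <= `|Tterm q d e i j hmax|
  /\ Num.sg (Beig q d e i j) = (-1) ^+ (maxn 0 (j + i - d)).
Proof.
move=> H.
have hH : H = minn j (d - i) by [].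
clearbody H.
have hq : (2 <= q)%N by case: Hq3 => [|[->]]; lia.
have HjH : (H <= j)%N by lia.
have HiH : (H <= d - i)%N by lia.
set A := Aterm q d e i j.
have TE : forall h, Tterm q d e i j h = (-1) ^+ (j - h) * A h.
  by move=> h; rewrite /Tterm /A /Aterm !mulrA.
have BE : Beig q d e i j = (-1) ^+ (j - H) * Ssum A H.
  rewrite /Beig -hH /Ssum mulr_sumr; apply: eq_big_nat => h /andP[_ hh].
  rewrite TE mulrA -exprD; congr (_ ^+ _ * _); lia.
have mono : forall k, (k < H)%N -> A k < A k.+1.
  move=> k hk; apply: Aterm_mono => //; lia.
have A0 : 0 < A 0%N by apply: Aterm_pos => //; lia.
have AH : 0 <= A H by apply/ltW/Aterm_pos => //; lia.
have /andP[S0 SH] := alt A H (fun k hk => ltW (mono k hk)) (ltW A0).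
have nB : `|Beig q d e i j| = Ssum A H by rewrite BE normrM normr_sign mul1r ger0_norm.
have nT : `|Tterm q d e i j H| = A H by rewrite TE normrM normr_sign mul1r ger0_norm.
have [low Spos] : `|Tterm q d e i j H| - `|Tprev q d e i j H| <= Ssum A H /\ 0 < Ssum A H.
  case: H hH HjH HiH BE mono AH S0 SH nB nT => [|k] hH HjH HiH BE mono AH S0 SH nB nT.
  - by rewrite /= nT Ssum0 normr0 subr0; split.
  - have Ak0 : 0 <= A k by apply/ltW/Aterm_pos => //; lia.
    have hk := mono k (ltnSn k).
    have /andP[Sk0 SkH] := alt A k (fun k' hk' => ltW (mono k' (ltnW hk'))) (ltW A0).
    rewrite /= nT TE normrM normr_sign mul1r ger0_norm // SsumS; split; lra.
split; first by rewrite nB.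
split; first by rewrite nB nT.
rewrite BE sgrM sgrX sgrN1 gtr0_sg // mulr1; congr (_ ^+ _); lia.
Qed.
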